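(* If $\mathcal{T}^{\mathrm{Exp}(\mu)}\geq_{\mathrm{st}}\mathcal{T}$ for all $\mu\in(0,\infty)$, then $\overline{F}(0)=1$.
   Context: Standing assumptions: $\mathcal{T}$ is a probability law on the Borel sets of $[0,\infty]$ with $\mathcal{T}((0,\infty])>0$ and $\inf\mathrm{supp}(\mathcal{T})=0$; $\overline{F}(t):=\mathcal{T}((t,\infty])$. For $\mu>0$: let $(T_k)$ be i.i.d. with law $\mathcal{T}$ and $(R_k)$ an independent i.i.d. sequence of exponential random variables with mean $\mu^{-1}$; $\mathcal{T}^{\mathrm{Exp}(\mu)}$ is the law of $\tilde T$ defined a.s. by $\tilde T=R_1+\cdots+R_{k-1}+T_k$ on $\{R_1<T_1,\ldots,R_{k-1}<T_{k-1},T_k\leq R_k\}$, $k\in\mathbb{N}$. $\mathcal{A}\geq_{\mathrm{st}}\mathcal{B}$ means $\mathcal{A}((t,\infty])\geq\mathcal{B}((t,\infty])$ for all $t\in[0,\infty)$. *)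

(* Defs.v *)
From Stdlib Require Import Reals.
Open Scope R_scope.

Definition set (X : Type) := X -> Prop.

(* Extended reals R ∪ {+oo}: Some x = x, None = +oo. *)
Definition ext := option R.

Definition ext_gt (t : R) : set ext :=
  fun y => match y with Some x => t < x | None => True end.

Definition ext_le_R (y : ext) (r : R) : Prop :=
  match y with Some x => x <= r | None => False end.

Definition ext_lt_R (y : ext) (r : R) : Prop :=
  match y with Some x => x < r | None => False end.

Definition ext_nonneg (y : ext) : Prop :=
  match y with Some x => 0 <= x | None => True end.

Record sigma_algebra {X : Type} (S : set (set X)) : Prop := {
  sa_full : S (fun _ => True);
  sa_compl : forall A, S A -> S (fun x => ~ A x);
  sa_union : forall A : nat -> set X, (forall n, S (A n)) ->
               S (fun x => exists n, A n x) }.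

Definition generated {X : Type} (G : set (set X)) : set (set X) :=
  fun A => forall S, sigma_algebra S -> (forall B, G B -> S B) -> S A.

Definition borel_ext : set (set ext) :=
  generated (fun A => exists t : R, A = ext_gt t).
Definition borel_R : set (set R) :=
  generated (fun A => exists t : R, A = (fun x => t < x)).

Record probability {X : Type} (S : set (set X)) (P : set X -> R) : Prop := {
  pr_sa : sigma_algebra S;
  pr_nonneg : forall A, S A -> 0 <= P A;
  pr_full : P (fun _ => True) = 1;
  pr_sigma_add : forall A : nat -> set X, (forall n, S (A n)) ->
     (forall m n x, m <> n -> A m x -> A n x -> False) ->
     Un_cv (fun N => sum_f_R0 (fun n => P (A n)) N) (P (fun x => exists n, A n x)) }.

(* T is a probability law on the Borel sets of [0, +oo]
   (a Borel probability on R ∪ {+oo} giving no mass to (-oo,0)) *)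
Definition law_on_0_inf (T : set ext -> R) : Prop :=
  probability borel_ext T /\
  T (fun y => match y with Some x => x < 0 | None => False end) = 0.

Definition Fbar (T : set ext -> R) (t : R) : R := T (ext_gt t).

Definition in_support (T : set ext -> R) (y : ext) : Prop :=
  match y with
  | Some x => forall eps, 0 < eps ->
      0 < T (fun z => match z with Some w => Rabs (w - x) < eps | None => False end)
  | None => forall M : R, 0 < T (ext_gt M)
  end.

Definition inf_support_is_0 (T : set ext -> R) : Prop :=
  (forall y, in_support T y -> ext_nonneg y) /\
  (forall eps, 0 < eps -> exists y, in_support T y /\ ext_lt_R y eps).

Definition has_law {Om E : Type} (F : set (set Om)) (P : set Om -> R)
    (B : set (set E)) (X : Om -> E) (Q : set E -> R) : Prop :=
  (forall A, B A -> F (fun w => A (X w))) /\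
  (forall A, B A -> P (fun w => A (X w)) = Q A).

Definition is_exponential {Om : Type} (F : set (set Om)) (P : set Om -> R)
    (mu : R) (X : Om -> R) : Prop :=
  (forall A, borel_R A -> F (fun w => A (X w))) /\
  (forall r, r < 0 -> P (fun w => r < X w) = 1) /\
  (forall r, 0 <= r -> P (fun w => r < X w) = exp (- (mu * r))).

Fixpoint prodR (n : nat) (f : nat -> R) : R :=
  match n with O => 1 | S m => prodR m f * f m end.

Fixpoint sumR (n : nat) (f : nat -> R) : R :=
  match n with O => 0 | S m => sumR m f + f m end.

Definition indep_family {Om : Type} (P : set Om -> R)
    (Tk : nat -> Om -> ext) (Rk : nat -> Om -> R) : Prop :=
  forall (n : nat) (A : nat -> set ext) (B : nat -> set R),
    (forall k, borel_ext (A k)) -> (forall k, borel_R (B k)) ->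
    P (fun w => forall k, (k < n)%nat -> A k (Tk k w) /\ B k (Rk k w)) =
    prodR n (fun k => P (fun w => A k (Tk k w)) * P (fun w => B k (Rk k w))).

(* The event {R_1<T_1,...,R_{k-1}<T_{k-1}, T_k <= R_k} (0-based indices here) *)
Definition stop_event {Om : Type} (Tk : nat -> Om -> ext) (Rk : nat -> Om -> R)
    (k : nat) (w : Om) : Prop :=
  (forall j, (j < k)%nat -> ext_gt (Rk j w) (Tk j w)) /\ ext_le_R (Tk k w) (Rk k w).

(* The event {Ttilde > t}, where Ttilde = R_1+...+R_{k-1}+T_k on the k-th stop event *)
Definition Ttilde_gt {Om : Type} (Tk : nat -> Om -> ext) (Rk : nat -> Om -> R)
    (t : R) (w : Om) : Prop :=
  exists k, stop_event Tk Rk k w /\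
    match Tk k w with
    | Some x => t < sumR k (fun j => Rk j w) + x
    | None => False
    end.

(* Main.v *)
Require Import Defs.
From Stdlib Require Import Reals Lra Lia Classical FunctionalExtensionality PropExtensionality.
Open Scope R_scope.

Lemma set_ext {X : Type} (A B : set X) : (forall x, A x <-> B x) -> A = B.
Proof. intro H. apply functional_extensionality; intro x. apply propositional_extensionality. apply H. Qed.

Lemma sa_ext {X : Type} (S : set (set X)) (A B : set X) :
  S A -> (forall x, A x <-> B x) -> S B.
Proof. intros HA H. rewrite <- (set_ext A B H). exact HA. Qed.

Lemma sa_empty {X : Type} (S : set (set X)) : sigma_algebra S -> S (fun _ => False).
Proof. intro H. eapply sa_ext. apply (sa_compl _ H), (sa_full _ H). simpl; tauto. Qed.

Lemma sa_prop {X : Type} (S : set (set X)) (Q : Prop) : sigma_algebra S -> S (fun _ => Q).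
Proof. intro H. destruct (classic Q) as [q|q].
 - eapply sa_ext. apply (sa_full _ H). simpl; tauto.
 - eapply sa_ext. apply (sa_empty _ H). simpl; tauto. Qed.

Lemma sa_union2 {X : Type} (S : set (set X)) A B : sigma_algebra S -> S A -> S B ->
  S (fun x => A x \/ B x).
Proof. intros H HA HB.
 apply (sa_ext S (fun x => exists n, (match n with O => A | _ => B end) x)).
 apply (sa_union _ H (fun n => match n with O => A | _ => B end)).
 intros [|n]; auto. simpl. intro x; split.
 - intros [[|n] Hn]; auto.
 - intros [h|h]; [exists O | exists 1%nat]; auto. Qed.

Lemma sa_inter {X : Type} (S : set (set X)) A B : sigma_algebra S -> S A -> S B ->
  S (fun x => A x /\ B x).
Proof. intros H HA HB.
 apply (sa_ext S (fun x => ~ (~ A x \/ ~ B x))). apply (sa_compl _ H). apply sa_union2; auto; apply (sa_compl _ H); auto.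
 simpl. intro x. tauto. Qed.

Lemma sa_inter_count {X : Type} (S : set (set X)) (A : nat -> set X) : sigma_algebra S ->
  (forall n, S (A n)) -> S (fun x => forall n, A n x).
Proof. intros H HA.
 apply (sa_ext S (fun x => ~ exists n, ~ A n x)). apply (sa_compl _ H). apply (sa_union _ H (fun n x => ~ A n x)).
 intro n; apply (sa_compl _ H); auto.
 simpl. intro x. split.
 - intros h n. apply NNPP. intro hn. apply h. exists n; auto.
 - intros h [n hn]. auto. Qed.

Lemma sa_impl {X : Type} (S : set (set X)) (Q : Prop) A : sigma_algebra S -> S A ->
  S (fun x => Q -> A x).
Proof. intros H HA. destruct (classic Q) as [q|q].
 - eapply sa_ext. apply HA. simpl; tauto.
 - eapply sa_ext. apply (sa_full _ H). simpl; tauto. Qed.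

Lemma gen_sa {X : Type} (G : set (set X)) : sigma_algebra (generated G).
Proof. split.
 - intros S HS _. apply (sa_full _ HS).
 - intros A HA S HS HG. apply (sa_compl _ HS). apply HA; auto.
 - intros A HA S HS HG. apply (sa_union _ HS). intro n; apply HA; auto. Qed.

Lemma gen_incl {X : Type} (G : set (set X)) A : G A -> generated G A.
Proof. intros HA S HS HG. auto. Qed.

Lemma P_empty {X : Type} SA (P : set X -> R) : probability SA P -> P (fun _ => False) = 0.
Proof. intro H. pose proof (pr_sa _ _ H) as Hs.
 pose proof (pr_sigma_add _ _ H (fun _ _ => False) (fun _ => sa_empty _ Hs)) as C.
 assert (E: P (fun x : X => exists n : nat, (fun _ _ => False) n x) = P (fun _ => False)).
 { f_equal. apply set_ext. intro x; split; [intros [_ f]; auto | tauto]. }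
 cbv beta in C, E. rewrite E in C. specialize (C (fun _ _ _ _ f _ => f)). set (c := P (fun _ => False)) in *.
 assert (Hc : 0 <= c) by (apply (pr_nonneg _ _ H), sa_empty, Hs).
 assert (Hs2: forall N, sum_f_R0 (fun _ => c) N = INR (S N) * c).
 { induction N. simpl. lra. rewrite tech5, IHN. rewrite (S_INR (S N)). lra. }
 destruct (Req_dec c 0) as [h|h]; auto.
 destruct (C c) as [N HN]. lra.
 specialize (HN (S N) ltac:(lia)). rewrite Hs2 in HN. unfold R_dist in HN.
 rewrite !S_INR in HN. pose proof (pos_INR N).
 rewrite Rabs_right in HN by nra. nra. Qed.

Lemma P_add2 {X : Type} SA (P : set X -> R) A B : probability SA P -> SA A -> SA B ->
  (forall x, A x -> B x -> False) -> P (fun x => A x \/ B x) = P A + P B.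
Proof. intros H HA HB D. pose proof (pr_sa _ _ H) as Hs.
 set (C := fun n => match n with O => A | 1%nat => B | _ => fun _ : X => False end).
 assert (HC : forall n, SA (C n)). { intros [|[|n]]; simpl; auto. apply sa_empty; auto. }
 pose proof (pr_sigma_add _ _ H C HC) as L.
 assert (Dj : forall m n x, m <> n -> C m x -> C n x -> False).
 { intros m n x hmn h1 h2. destruct m as [|[|m]], n as [|[|n]]; simpl in *; try tauto;
   try lia; eauto. }
 specialize (L Dj).
 assert (E: (fun x => exists n, C n x) = (fun x => A x \/ B x)).
 { apply set_ext. intro x; split.
   - intros [[|[|n]] Hn]; simpl in Hn; tauto.
   - intros [h|h]; [exists O | exists 1%nat]; auto. }
 rewrite E in L. clear E.
 assert (L2 : Un_cv (fun N => sum_f_R0 (fun n => P (C n)) N) (P A + P B)).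
 { intros eps he. exists 1%nat. intros n hn.
   assert (Hs2 : sum_f_R0 (fun n => P (C n)) n = P A + P B).
   { induction n. lia. destruct (Nat.eq_dec n 0). subst. simpl. reflexivity.
     rewrite tech5, IHn by lia. simpl. destruct n. lia. rewrite (P_empty SA P H). lra. }
   rewrite Hs2. unfold R_dist. rewrite Rminus_diag, Rabs_R0. auto. }
 eapply UL_sequence; eauto. Qed.

Lemma P_compl {X : Type} SA (P : set X -> R) A : probability SA P -> SA A ->
  P (fun x => ~ A x) = 1 - P A.
Proof. intros H HA. pose proof (pr_sa _ _ H) as Hs.
 rewrite <- (pr_full _ _ H).
 assert (E : (fun _ : X => True) = (fun x => A x \/ ~ A x)) by (apply set_ext; intro x; tauto).
 rewrite E, (P_add2 SA) by (auto; try apply (sa_compl _ Hs); auto; tauto). lra. Qed.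

Lemma P_mono {X : Type} SA (P : set X -> R) A B : probability SA P -> SA A -> SA B ->
  (forall x, A x -> B x) -> P A <= P B.
Proof. intros H HA HB I. pose proof (pr_sa _ _ H) as Hs.
 assert (E : B = (fun x => A x \/ (B x /\ ~ A x))).
 { apply set_ext; intro x. split; try tauto. intros [h|h]; auto; tauto. }
 rewrite E, (P_add2 SA); auto.
 - pose proof (pr_nonneg _ _ H (fun x => B x /\ ~ A x)). apply Rplus_le_reg_l with (- P A).
   ring_simplify. apply H0. apply sa_inter; auto. apply (sa_compl _ Hs); auto.
 - apply sa_inter; auto. apply (sa_compl _ Hs); auto.
 - tauto. Qed.

Definition qq (n m d : nat) : R := (INR n - INR m) / INR (Datatypes.S d).

Lemma dense (a b : R) : a < b -> exists n m d, a < qq n m d < b.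
Proof. intro hab. destruct (archimed_cor1 (b - a)) as [N [HN HN0]]. lra.
 assert (HNp : 0 < INR N) by (apply lt_0_INR; lia).
 destruct (archimed (a * INR N)) as [h1 h2].
 set (z := up (a * INR N)) in *.
 assert (Ez : (Z.of_nat (Z.to_nat z) - Z.of_nat (Z.to_nat (- z)) = z)%Z) by lia.
 exists (Z.to_nat z), (Z.to_nat (- z)), (N - 1)%nat. unfold qq.
 replace (Datatypes.S (N - 1)) with N by lia.
 rewrite (INR_IZR_INZ (Z.to_nat z)), (INR_IZR_INZ (Z.to_nat (- z))), <- minus_IZR, Ez.
 assert (Hinv : / INR N * INR N = 1) by (field; lra).
 split.
 - apply Rmult_lt_reg_r with (INR N); auto. replace (IZR z / INR N * INR N) with (IZR z) by (field; lra). lra.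
 - apply Rmult_lt_reg_r with (INR N); auto. replace (IZR z / INR N * INR N) with (IZR z) by (field; lra).
   assert (/ INR N * INR N < (b - a) * INR N) by (apply Rmult_lt_compat_r; auto). lra.
Qed.

Lemma sa_union_q {X : Type} (S : set (set X)) (Q : R -> set X) : sigma_algebra S ->
  (forall r, S (Q r)) -> S (fun w => exists n m d, Q (qq n m d) w).
Proof. intros H HQ. apply (sa_union _ H (fun n w => exists m d, Q (qq n m d) w)). intro n.
 apply (sa_union _ H (fun m w => exists d, Q (qq n m d) w)). intro m.
 apply (sa_union _ H (fun d w => Q (qq n m d) w)). auto. Qed.

Lemma sa_q_ext {X : Type} (S : set (set X)) (Q : R -> set X) (B : set X) : sigma_algebra S ->
  (forall r, S (Q r)) -> (forall w, (exists n m d, Q (qq n m d) w) <-> B w) -> S B.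
Proof. intros H HQ E. apply (sa_ext S (fun w => exists n m d, Q (qq n m d) w)). apply sa_union_q; eauto. exact E. Qed.

Definition mR {Om : Type} (F : set (set Om)) (Z : Om -> R) : Prop :=
  forall r, F (fun w => r < Z w) /\ F (fun w => Z w < r).

Lemma mR_sum {Om : Type} (F : set (set Om)) Z1 Z2 : sigma_algebra F -> mR F Z1 -> mR F Z2 ->
  mR F (fun w => Z1 w + Z2 w).
Proof. intros H h1 h2 r. split.
 - apply (sa_q_ext F (fun q w => q < Z1 w /\ r - q < Z2 w)); auto. intro q. apply sa_inter; auto. apply h1. apply h2.
   intro w; simpl; split.
   + intros [n [m [d hq]]]. lra.
   + intro hw. destruct (dense (r - Z2 w) (Z1 w)) as [n [m [d hq]]]. lra. exists n, m, d. lra.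
 - apply (sa_q_ext F (fun q w => Z1 w < q /\ Z2 w < r - q)); auto. intro q. apply sa_inter; auto. apply h1. apply h2.
   intro w; simpl; split.
   + intros [n [m [d hq]]]. lra.
   + intro hw. destruct (dense (Z1 w) (r - Z2 w)) as [n [m [d hq]]]. lra. exists n, m, d. lra.
Qed.

Lemma mR_const {Om : Type} (F : set (set Om)) c : sigma_algebra F -> mR F (fun _ => c).
Proof. intros H r. split; apply sa_prop; auto. Qed.

Lemma mR_minus {Om : Type} (F : set (set Om)) t Z : sigma_algebra F -> mR F Z ->
  mR F (fun w => t - Z w).
Proof. intros H h r. split.
 - apply (sa_ext F (fun w => Z w < t - r)). apply h. intro; lra.
 - apply (sa_ext F (fun w => t - r < Z w)). apply h. intro; lra. Qed.

Lemma mR_sumR {Om : Type} (F : set (set Om)) (Rk : nat -> Om -> R) k : sigma_algebra F ->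
  (forall j, mR F (Rk j)) -> mR F (fun w => sumR k (fun j => Rk j w)).
Proof. intros H h. induction k; simpl.
 - apply mR_const; auto.
 - apply mR_sum; auto. Qed.

Lemma mR_exp {Om : Type} (F : set (set Om)) P mu Y : sigma_algebra F ->
  is_exponential F P mu Y -> mR F Y.
Proof. intros H [hm _] r.
 assert (G : forall s, F (fun w => s < Y w)).
 { intro s. apply (hm (fun x => s < x)). apply gen_incl. exists s; reflexivity. }
 split; auto.
 apply (sa_q_ext F (fun q w => q < r /\ ~ (q < Y w))); auto. intro q. apply sa_inter; auto. apply sa_prop; auto. apply (sa_compl _ H); auto.
 intro w; simpl; split.
 + intros [n [m [d hq]]]. lra.
 + intro hw. destruct (dense (Y w) r) as [n [m [d hq]]]. lra. exists n, m, d. lra.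
Qed.

Definition mE {Om : Type} (F : set (set Om)) (X : Om -> ext) : Prop :=
  forall r, F (fun w => ext_gt r (X w)).

Lemma mE_gt {Om : Type} (F : set (set Om)) X Y : sigma_algebra F -> mE F X -> mR F Y ->
  F (fun w => ext_gt (Y w) (X w)).
Proof. intros H hX hY.
 apply (sa_q_ext F (fun q w => ~ (q < Y w) /\ ext_gt q (X w))); auto. intro q. apply sa_inter; auto. apply (sa_compl _ H); apply hY.
 intro w; simpl; split.
 + intros [n [m [d [hq1 hq2]]]]. destruct (X w); simpl in *; auto. lra.
 + intro hw. destruct (X w) as [x|]; simpl in *.
   * destruct (dense (Y w) x) as [n [m [d hq]]]. lra. exists n, m, d. lra.
   * destruct (dense (Y w) (Y w + 1)) as [n [m [d hq]]]. lra. exists n, m, d. split; auto; lra.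
Qed.

Lemma mE_some {Om : Type} (F : set (set Om)) X : sigma_algebra F -> mE F X ->
  F (fun w => X w <> None).
Proof. intros H hX.
 apply (sa_q_ext F (fun q w => ~ ext_gt q (X w))); auto. intro q. apply (sa_compl _ H); apply hX.
 intro w; simpl; split.
 + intros [n [m [d hq]]]. destruct (X w); simpl in *; [congruence | tauto].
 + intro hw. destruct (X w) as [x|]; simpl in *; [|congruence].
   destruct (dense x (x + 1)) as [n [m [d hq]]]. lra. exists n, m, d. lra.
Qed.

Lemma Ttilde_meas {Om : Type} (F : set (set Om)) Tk Rk t : sigma_algebra F ->
  (forall k, mE F (Tk k)) -> (forall k, mR F (Rk k)) -> F (Ttilde_gt Tk Rk t).
Proof. intros H hT hR.
 apply (sa_ext F (fun w => exists k, (fun k w =>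
   (forall j, (j < k)%nat -> ext_gt (Rk j w) (Tk j w)) /\ ~ ext_gt (Rk k w) (Tk k w) /\
   Tk k w <> None /\ ext_gt (t - sumR k (fun j => Rk j w)) (Tk k w)) k w)).
 - apply (sa_union _ H). intro k. apply sa_inter; auto.
   + apply sa_inter_count; auto. intro j. apply sa_impl; auto. apply mE_gt; auto.
   + apply sa_inter; auto. apply (sa_compl _ H), mE_gt; auto.
     apply sa_inter; auto. apply mE_some; auto. apply mE_gt; auto.
     apply mR_minus; auto. apply mR_sumR; auto.
 - intro w. unfold Ttilde_gt, stop_event. split.
   + intros [k [h1 [h2 [h3 h4]]]]. exists k. split. split; auto.
     destruct (Tk k w); simpl in *; auto. lra. destruct (Tk k w); simpl in *; auto. lra.
   + intros [k [[h1 h2] h3]]. exists k. split; auto. destruct (Tk k w); simpl in *; try tauto.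
     split. lra. split. congruence. lra.
Qed.

Lemma ext_gt_mono r s y : s <= r -> ext_gt r y -> ext_gt s y.
Proof. destruct y; simpl; auto. lra. Qed.

Definition uu (n : nat) : R := / INR (Datatypes.S n).

Lemma uu_pos n : 0 < uu n.
Proof. unfold uu. apply Rinv_0_lt_compat, lt_0_INR. lia. Qed.

Lemma uu_dec m n : (m <= n)%nat -> uu n <= uu m.
Proof. intro h. unfold uu. apply Rinv_le_contravar. apply lt_0_INR; lia. apply le_INR; lia. Qed.

Definition CC (n : nat) : set ext := match n with
  | O => ext_gt (uu 0)
  | Datatypes.S n' => fun y => ext_gt (uu (Datatypes.S n')) y /\ ~ ext_gt (uu n') y end.

Lemma CC_sub n y : CC n y -> ext_gt (uu n) y.
Proof. destruct n; simpl; tauto. Qed.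

Lemma CC_reach n y : ext_gt (uu n) y -> exists m, CC m y.
Proof. induction n; intro h. exists O; auto.
 destruct (classic (ext_gt (uu n) y)); auto. exists (Datatypes.S n). simpl; auto. Qed.

Lemma borel_gt r : borel_ext (ext_gt r).
Proof. apply gen_incl. exists r; auto. Qed.

Lemma right_cont (T : set ext -> R) : probability borel_ext T ->
  forall c, c < T (ext_gt 0) -> exists t, 0 < t /\ c < T (ext_gt t).
Proof. intros H c hc. pose proof (pr_sa _ _ H) as Hs.
 assert (HC : forall n, borel_ext (CC n)).
 { intros [|n]; simpl. apply borel_gt. apply sa_inter; auto. apply borel_gt.
   apply (sa_compl _ Hs), borel_gt. }
 assert (Dj : forall m n x, m <> n -> CC m x -> CC n x -> False).
 { assert (K : forall m n x, (m < n)%nat -> CC m x -> CC n x -> False).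
   { intros m [|n] x hmn h1 h2. lia. simpl in h2. apply (proj2 h2).
     apply ext_gt_mono with (uu m). apply uu_dec; lia. apply CC_sub; auto. }
   intros m n x hmn h1 h2. destruct (Nat.lt_gt_cases m n) as [[h|h] _]; auto; eauto. }
 pose proof (pr_sigma_add _ _ H CC HC Dj) as L.
 assert (E : (fun x => exists n, CC n x) = ext_gt 0).
 { apply set_ext. intro y. split.
   - intros [n hn]. apply ext_gt_mono with (uu n). left; apply uu_pos. apply CC_sub; auto.
   - intro hy. destruct y as [x|].
     + simpl in hy. destruct (archimed_cor1 x hy) as [N [hN hN0]].
       apply (CC_reach (N - 1)). simpl. unfold uu. replace (Datatypes.S (N - 1)) with N by lia. lra.
     + exists O. simpl. auto. }
 rewrite E in L.
 assert (Ps : forall N, sum_f_R0 (fun n => T (CC n)) N = T (ext_gt (uu N))).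
 { induction N. simpl. auto. rewrite tech5, IHN.
   assert (E2 : ext_gt (uu (Datatypes.S N)) = (fun y => ext_gt (uu N) y \/ CC (Datatypes.S N) y)).
   { apply set_ext. intro y. simpl. split.
     - intro h. destruct (classic (ext_gt (uu N) y)); tauto.
     - intros [h|[h _]]; auto. apply ext_gt_mono with (uu N); auto. apply uu_dec; lia. }
   rewrite E2, (P_add2 borel_ext); auto. apply borel_gt. simpl. tauto. }
 destruct (L (T (ext_gt 0) - c)) as [N HN]. lra.
 specialize (HN N ltac:(lia)). rewrite Ps in HN. unfold R_dist in HN.
 exists (uu N). split. apply uu_pos.
 apply Rabs_def2 in HN. lra. Qed.

Theorem mainTheorem13 (T : set ext -> R)
  (HT : law_on_0_inf T)
  (Hpos : 0 < Fbar T 0)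
  (Hsupp : inf_support_is_0 T)
  (Hst : forall mu : R, 0 < mu ->
     exists (Om : Type) (F : set (set Om)) (P : set Om -> R)
            (Tk : nat -> Om -> ext) (Rk : nat -> Om -> R),
       probability F P /\
       (forall k, has_law F P borel_ext (Tk k) T) /\
       (forall k, is_exponential F P mu (Rk k)) /\
       indep_family P Tk Rk /\
       (forall t, 0 <= t -> P (Ttilde_gt Tk Rk t) >= Fbar T t)) :
  Fbar T 0 = 1.
Proof.
 destruct HT as [HTp _]. pose proof (pr_sa _ _ HTp) as HTs.
 unfold Fbar in *. set (b := T (ext_gt 0)) in *.
 assert (Hb1 : b <= 1).
 { rewrite <- (pr_full _ _ HTp). apply (P_mono borel_ext); auto. apply borel_gt.
   apply (sa_full _ HTs). }
 destruct (Rle_lt_or_eq_dec _ _ Hb1) as [Hb | Hb]; auto. exfalso.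
 set (c := b / (2 - b)).
 assert (Hcb : c < b).
 { unfold c. apply Rmult_lt_reg_r with (2 - b). lra.
   replace (b / (2 - b) * (2 - b)) with b by (field; lra). nra. }
 destruct (right_cont T HTp c Hcb) as [t [Ht Hca]].
 set (a := T (ext_gt t)) in *.
 assert (Hba : b < a * (2 - b)).
 { unfold c in Hca. apply Rmult_lt_compat_r with (r := 2 - b) in Hca. 2: lra.
   replace (b / (2 - b) * (2 - b)) with b in Hca by (field; lra). lra. }
 destruct (Hst 1 ltac:(lra)) as [Om [F [P [Tk [Rk [HP [Hlaw [Hexp [Hind Hge]]]]]]]]].
 pose proof (pr_sa _ _ HP) as Hs.
 assert (hT : forall k, mE F (Tk k)). { intros k r. apply (proj1 (Hlaw k)), borel_gt. }
 assert (hR : forall k, mR F (Rk k)). { intro k. eapply mR_exp; eauto. }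
 assert (PT : forall k A, borel_ext A -> P (fun w => A (Tk k w)) = T A).
 { intros k A hA. apply (proj2 (Hlaw k)); auto. }
 set (e := exp (- (1 * t))).
 assert (He0 : 0 < e) by apply exp_pos.
 assert (He1 : e < 1). { unfold e. assert (hh : exp (-(1*t)) < exp 0) by (apply exp_increasing; lra). rewrite exp_0 in hh. exact hh. }
 assert (PYgt : forall k, P (fun w => t < Rk k w) = e).
 { intro k. destruct (Hexp k) as [_ [_ h]]. apply h. lra. }
 assert (PY0 : forall k, P (fun w => 0 < Rk k w) = 1).
 { intro k. destruct (Hexp k) as [_ [_ h]]. rewrite h by lra.
   rewrite Rmult_0_r, Ropp_0, exp_0. auto. }
 assert (MYgt : forall k r, F (fun w => r < Rk k w)) by (intros k r; apply (hR k r)).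
 assert (MYle : forall k r, F (fun w => Rk k w <= r)).
 { intros k r. apply (sa_ext F (fun w => ~ (r < Rk k w))). apply (sa_compl _ Hs); auto.
   intro; lra. }
 assert (MYint : forall k, F (fun w => 0 < Rk k w /\ Rk k w <= t)) by (intro; apply sa_inter; auto).
 assert (PYint : forall k, P (fun w => 0 < Rk k w /\ Rk k w <= t) = 1 - e).
 { intro k. rewrite <- (PY0 k), <- (PYgt k).
   assert (E : (fun w => 0 < Rk k w) = (fun w => (0 < Rk k w /\ Rk k w <= t) \/ t < Rk k w)).
   { apply set_ext; intro w. split. intro; destruct (Rle_or_lt (Rk k w) t); auto. intros [h|h]; lra. }
   rewrite E, (P_add2 F); auto. ring. intros w h1 h2; lra. }
 assert (MXgt : forall k r, F (fun w => ext_gt r (Tk k w))) by (intros; apply hT).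
 assert (MXle : forall k r, F (fun w => ~ ext_gt r (Tk k w))) by (intros; apply (sa_compl _ Hs); auto).
 assert (bRgt : forall r, borel_R (fun y => r < y)). { intro r. apply gen_incl. exists r; auto. }
 assert (bRint : borel_R (fun y => 0 < y /\ y <= t)).
 { apply sa_inter. apply gen_sa. auto. apply (sa_ext _ (fun y => ~ (t < y))).
   apply (sa_compl _ (gen_sa _)); apply bRgt. intro y; split; intro; lra. }
 assert (bEle : forall r, borel_ext (fun y => ~ ext_gt r y)).
 { intro r. apply (sa_compl _ HTs), borel_gt. }
 assert (Tle : forall r, T (fun y => ~ ext_gt r y) = 1 - T (ext_gt r)).
 { intro r. apply (P_compl borel_ext); auto. apply borel_gt. }
 set (D1a := fun w => ~ ext_gt t (Tk 0%nat w) /\ t < Rk 0%nat w).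
 set (D1b := fun w => ~ ext_gt 0 (Tk 0%nat w) /\ (0 < Rk 0%nat w /\ Rk 0%nat w <= t)).
 set (D2 := fun w => (ext_gt t (Tk 0%nat w) /\ (0 < Rk 0%nat w /\ Rk 0%nat w <= t)) /\
                     (~ ext_gt 0 (Tk 1%nat w) /\ 0 < Rk 1%nat w)).
 assert (M1a : F D1a) by (unfold D1a; apply sa_inter; auto).
 assert (M1b : F D1b) by (unfold D1b; apply sa_inter; auto).
 assert (M2 : F D2) by (unfold D2; apply sa_inter; try apply sa_inter; auto).
 assert (P1a : P D1a = (1 - a) * e).
 { pose proof (Hind 1%nat (fun _ y => ~ ext_gt t y) (fun _ y => t < y)
      (fun _ => bEle t) (fun _ => bRgt t)) as I. simpl in I.
   rewrite (PT 0%nat (fun y => ~ ext_gt t y)), PYgt, Tle in I by auto.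
   assert (E : (fun w => forall k, (k < 1)%nat -> ~ ext_gt t (Tk k w) /\ t < Rk k w) = D1a).
   { apply set_ext; intro w. unfold D1a. split. intro h; apply h; lia.
     intros h k hk. replace k with 0%nat by lia. auto. }
   rewrite E in I. rewrite I. fold a. ring. }
 assert (P1b : P D1b = (1 - b) * (1 - e)).
 { pose proof (Hind 1%nat (fun _ y => ~ ext_gt 0 y) (fun _ y => 0 < y /\ y <= t)
      (fun _ => bEle 0) (fun _ => bRint)) as I. simpl in I.
   rewrite (PT 0%nat (fun y => ~ ext_gt 0 y)), PYint, Tle in I by auto.
   assert (E : (fun w => forall k, (k < 1)%nat -> ~ ext_gt 0 (Tk k w) /\ (0 < Rk k w /\ Rk k w <= t)) = D1b).
   { apply set_ext; intro w. unfold D1b. split. intro h; apply h; lia.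
     intros h k hk. replace k with 0%nat by lia. auto. }
   rewrite E in I. rewrite I. fold b. ring. }
 assert (P2 : P D2 = (a * (1 - e)) * ((1 - b) * 1)).
 { set (A := fun k => match k with O => ext_gt t | _ => fun y => ~ ext_gt 0 y end).
   set (B := fun k => match k with O => fun y => 0 < y /\ y <= t | _ => fun y => 0 < y end).
   assert (hA : forall k, borel_ext (A k)) by (intros [|k]; simpl; auto; apply borel_gt).
   assert (hB : forall k, borel_R (B k)) by (intros [|k]; simpl; auto).
   pose proof (Hind 2%nat A B hA hB) as I. simpl in I.
   rewrite (PT 0%nat (ext_gt t)), (PT 1%nat (fun y => ~ ext_gt 0 y)) in I by (auto; apply borel_gt). rewrite PYint, PY0, Tle in I. fold a in I; fold b in I.
   assert (E : (fun w => forall k, (k < 2)%nat -> A k (Tk k w) /\ B k (Rk k w)) = D2).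
   { apply set_ext; intro w. unfold D2. split. intro h. split; [apply (h 0%nat) | apply (h 1%nat)]; lia.
     intros h k hk. destruct k as [|[|k]]; simpl; try tauto. lia. }
   rewrite E in I. rewrite I. ring. }
 assert (DT : forall w, Ttilde_gt Tk Rk t w -> (D1a w \/ D1b w) \/ D2 w -> False).
 { intros w [k [[hs1 hs2] hk]] hD. unfold D1a, D1b, D2 in hD.
   destruct k as [|[|k]].
   - simpl in hk. destruct (Tk 0%nat w) as [x|]; simpl in *; try tauto; intuition lra.
   - pose proof (hs1 0%nat ltac:(lia)) as j0. simpl in hk.
     destruct (Tk 0%nat w) as [x0|]; destruct (Tk 1%nat w) as [x1|]; simpl in *; try tauto; intuition lra.
   - pose proof (hs1 0%nat ltac:(lia)) as j0. pose proof (hs1 1%nat ltac:(lia)) as j1.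
     destruct (Tk 0%nat w) as [x0|]; destruct (Tk 1%nat w) as [x1|]; simpl in *; try tauto; intuition lra. }
 assert (PU : P (fun w => (D1a w \/ D1b w) \/ D2 w) = P D1a + P D1b + P D2).
 { rewrite (P_add2 F); auto. rewrite (P_add2 F); auto.
   - unfold D1a, D1b; intros w h1 h2; lra.
   - apply sa_union2; auto.
   - unfold D1a, D1b, D2; intros w [h1|h1] h2; destruct (Tk 0%nat w); simpl in *; tauto || lra. }
 assert (HTt : P (Ttilde_gt Tk Rk t) <= 1 - P (fun w => (D1a w \/ D1b w) \/ D2 w)).
 { rewrite <- (P_compl F); auto. apply (P_mono F); auto.
   apply Ttilde_meas; auto. apply (sa_compl _ Hs). apply sa_union2; auto. apply sa_union2; auto.
   all: try (apply sa_union2; auto; apply sa_union2; auto).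
   all: try (intros w h1 h2; eapply DT; eauto). }
 specialize (Hge t ltac:(lra)). fold a in Hge.
 rewrite PU, P1a, P1b, P2 in HTt.
 assert (0 < (1 - e) * (a * (2 - b) - b)) by (apply Rmult_lt_0_compat; lra).
 nra.
Qed.
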